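(* Consider the two-layer system $$\dot{\mathbf{q}}=\mathbf{f}_0(\mathbf{q})+\mathbf{g}_0(\mathbf{q})\boldsymbol{\xi},\qquad \dot{\boldsymbol{\xi}}=\mathbf{f}_1(\mathbf{q},\boldsymbol{\xi})+\mathbf{g}_1(\mathbf{q},\boldsymbol{\xi})\mathbf{u},$$ with $\mathbf{q}\in\mathbb{R}^n$, $\boldsymbol{\xi}\in\mathbb{R}^p$, $\mathbf{u}\in\mathbb{R}^m$ and locally Lipschitz $\mathbf{f}_0,\mathbf{g}_0,\mathbf{f}_1,\mathbf{g}_1$. Let $h_0:\mathbb{R}^n\to\mathbb{R}$ be continuously differentiable, with $\mathcal{C}_0=\{\mathbf{q}:h_0(\mathbf{q})\ge0\}$. Suppose there exist a continuously differentiable $\mathbf{k}_0:\mathbb{R}^n\to\mathbb{R}^p$ and constants $\alpha,\varepsilon>0$ such that for all $\mathbf{q}\in\mathbb{R}^n$ $$L_{\mathbf{f}_0}h_0(\mathbf{q})+L_{\mathbf{g}_0}h_0(\mathbf{q})\mathbf{k}_0(\mathbf{q})\ge-\alpha h_0(\mathbf{q})+\tfrac{1}{\varepsilon}\|L_{\mathbf{g}_0}h_0(\mathbf{q})\|^2.$$ Suppose further there exist a tracking controller $\mathbf{k}:\mathbb{R}^n\times\mathbb{R}^p\to\mathbb{R}^m$, a continuously differentiable $V:\mathbb{R}^n\times\mathbb{R}^p\to\mathbb{R}_{\ge0}$ and constants $\gamma_1,\gamma_2,\gamma>0$ such that for all $(\mathbf{q},\boldsymbol{\xi})$: $\gamma_1\|\boldsymbol{\xi}-\mathbf{k}_0(\mathbf{q})\|^2\le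 V(\mathbf{q},\boldsymbol{\xi})\le\gamma_2\|\boldsymbol{\xi}-\mathbf{k}_0(\mathbf{q})\|^2$ and $\dot V(\mathbf{q},\boldsymbol{\xi})\le-\gamma V(\mathbf{q},\boldsymbol{\xi})$ along the closed-loop system with $\mathbf{u}=\mathbf{k}(\mathbf{q},\boldsymbol{\xi})$. Let $\mu>0$, $h(\mathbf{q},\boldsymbol{\xi})=h_0(\mathbf{q})-\frac{1}{\mu\gamma_1}V(\mathbf{q},\boldsymbol{\xi})$ and $\mathcal{C}=\{(\mathbf{q},\boldsymbol{\xi}):h(\mathbf{q},\boldsymbol{\xi})\ge0\}$. If $\gamma\ge\alpha+\frac{\varepsilon\mu}{4}$, then $\mathcal{C}$ is forward invariant for the closed-loop system with $\mathbf{u}=\mathbf{k}(\mathbf{q},\boldsymbol{\xi})$.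
   Context: $L_{\mathbf{f}_0}h_0(\mathbf{q})=\nabla h_0(\mathbf{q})\cdot\mathbf{f}_0(\mathbf{q})$, $L_{\mathbf{g}_0}h_0(\mathbf{q})=\nabla h_0(\mathbf{q})^\top\mathbf{g}_0(\mathbf{q})$; $\dot V$ denotes the derivative of $V$ along the closed-loop vector field. A set is forward invariant if every closed-loop trajectory starting in it remains in it on its maximal interval of existence. *)

(* Defs.v *)
From HB Require Import structures.
From mathcomp Require Import all_boot all_order all_algebra.
From mathcomp Require Import all_classical all_reals all_analysis.
Set Implicit Arguments. Unset Strict Implicit. Unset Printing Implicit Defensive.
Import Order.TTheory GRing.Theory Num.Theory.
Import numFieldNormedType.Exports.
Local Open Scope classical_set_scope.
Local Open Scope ring_scope.

(* Vectors are row vectors 'rV[R]_n.  An input matrix g(q) in R^{n x p}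
   acting on xi in R^p is represented (transposed) as g q : 'M_(p, n),
   so that g(q) xi  is  xi *m g q. *)

Definition dotv {R : realType} {p : nat} (u v : 'rV[R]_p) : R :=
  \sum_(i < p) u ord0 i * v ord0 i.
Definition sqnorm {R : realType} {p : nat} (v : 'rV[R]_p) : R := dotv v v.

Definition C1 {R : realType} {U V : normedModType R} (f : U -> V) : Prop :=
  (forall x, differentiable f x) /\ (forall v : U, continuous (fun x => 'd f x v)).

Definition loc_lipschitz {R : realType} {U V : normedModType R} (f : U -> V) : Prop :=
  forall x : U, exists2 r : R, 0 < r & exists L : R, forall y z : U,
    ball x r y -> ball x r z -> `|f y - f z| <= L * `|y - z|.

Definition LieF {R : realType} {n : nat} (h : 'rV[R]_n -> R) (f : 'rV[R]_n -> 'rV[R]_n)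
  (q : 'rV[R]_n) : R := 'd h q (f q).
Definition LieG {R : realType} {n p : nat} (h : 'rV[R]_n -> R)
  (g : 'rV[R]_n -> 'M[R]_(p, n)) (q : 'rV[R]_n) : 'rV[R]_p :=
  \row_(i < p) 'd h q (row i (g q)).

Definition closed_loop {R : realType} {n p m : nat}
  (f0 : 'rV[R]_n -> 'rV[R]_n) (g0 : 'rV[R]_n -> 'M[R]_(p, n))
  (f1 : 'rV[R]_n * 'rV[R]_p -> 'rV[R]_p) (g1 : 'rV[R]_n * 'rV[R]_p -> 'M[R]_(m, p))
  (k : 'rV[R]_n * 'rV[R]_p -> 'rV[R]_m) (x : 'rV[R]_n * 'rV[R]_p)
  : 'rV[R]_n * 'rV[R]_p :=
  (f0 x.1 + x.2 *m g0 x.1, f1 x + k x *m g1 x).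

Definition forward_invariant {R : realType} {U : normedModType R}
  (F : U -> U) (S : set U) : Prop :=
  forall (T : R) (x : R -> U),
    0 < T ->
    {within [set t | 0 <= t < T], continuous x} ->
    (forall t, 0 < t < T -> is_derive t 1 x (F (x t))) ->
    S (x 0) -> forall t, 0 <= t < T -> S (x t).

(* Main.v *)
Require Import Defs.
From HB Require Import structures.
From mathcomp Require Import all_boot all_order all_algebra.
From mathcomp Require Import all_classical all_reals all_analysis.
From mathcomp Require Import ring lra.
Import Order.TTheory GRing.Theory Num.Theory.
Import numFieldNormedType.Exports.
Local Open Scope classical_set_scope.
Local Open Scope ring_scope.

Definition fstU (R : realType) (n p : nat) (y : 'rV[R]_n * 'rV[R]_p) : 'rV[R]_n := y.1.
Lemma fstU_lin (R : realType) (n p : nat) : linear (@fstU R n p).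
Proof. by move=> a u v. Qed.
HB.instance Definition _ (R : realType) (n p : nat) :=
  GRing.isLinear.Build R ('rV[R]_n * 'rV[R]_p)%type 'rV[R]_n _ (@fstU R n p) (@fstU_lin R n p).
Lemma fstU_cont (R : realType) (n p : nat) : continuous (@fstU R n p).
Proof. move=> y; exact: cvg_fst. Qed.

Lemma chain_rule (R : realType) (W : normedModType R) (f : W -> R) (x : R -> W) (t : R) (d : W) :
  is_derive t 1 x d -> differentiable f (x t) -> is_derive t 1 (f \o x) ('d f (x t) d).
Proof.
move=> hx hf.
have dx : differentiable x t by apply/derivable1_diffP; exact: (@ex_derive _ _ _ _ _ _ _ hx).
have dfx : differentiable (f \o x) t := differentiable_comp dx hf.
have := derivableP (diff_derivable (v:=(1:R)) dfx).
rewrite deriveE // diff_comp //=.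
have <- : 'D_1 x t = d := @derive_val _ _ _ _ _ _ _ hx.
by rewrite deriveE.
Qed.

Lemma h0fst_diff (R : realType) (n p : nat) (h0 : 'rV[R]_n -> R) (y : 'rV[R]_n * 'rV[R]_p) :
  differentiable h0 y.1 ->
  differentiable (h0 \o @fstU R n p) y /\
  forall v, 'd (h0 \o @fstU R n p) y v = 'd h0 (y.1) (v.1).
Proof.
move=> hd.
have df : differentiable (@fstU R n p) y := linear_differentiable _ (@fstU_cont R n p).
split; first exact: differentiable_comp df hd.
move=> v; rewrite (diff_comp df hd) //= diff_lin //; exact: fstU_cont.
Qed.

Lemma dh0_xi (R : realType) (n p : nat) (h0 : 'rV[R]_n -> R) (g0 : 'rV[R]_n -> 'M[R]_(p, n))
  (q : 'rV[R]_n) (xi : 'rV[R]_p) :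
  'd h0 q (xi *m g0 q) = dotv (LieG h0 g0 q) xi.
Proof.
rewrite mulmx_sum_row linear_sum /dotv; apply: eq_bigr => i _.
by rewrite linearZ /= mxE mulrC.
Qed.

Lemma dotvDr (R : realType) (p : nat) (u v w : 'rV[R]_p) :
  dotv u (v + w) = dotv u v + dotv u w.
Proof. by rewrite /dotv -big_split; apply: eq_bigr => i _; rewrite mxE mulrDr. Qed.

Lemma young (R : realType) (eps a b : R) : 0 < eps ->
  - (eps^-1 * (a * a)) - eps / 4 * (b * b) <= a * b.
Proof.
move=> he.
have E : eps * (b / 2 + a * eps^-1) ^+ 2 = eps / 4 * (b * b) + a * b + eps^-1 * (a * a).
  by field; rewrite (gt_eqF he).
have : 0 <= eps * (b / 2 + a * eps^-1) ^+ 2 by apply: mulr_ge0; [exact: ltW | exact: sqr_ge0].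
rewrite E; move: (eps^-1 * (a * a)) (eps / 4 * (b * b)) (a * b) => X Y Z h; lra.
Qed.

Lemma dotv_young (R : realType) (p : nat) (eps : R) (u v : 'rV[R]_p) : 0 < eps ->
  - (eps^-1 * sqnorm u) - eps / 4 * sqnorm v <= dotv u v.
Proof.
move=> he; rewrite /sqnorm /dotv !mulr_sumr -sumrN -sumrB.
by apply: ler_sum => i _; apply: young.
Qed.

Lemma pointwise (R : realType) (n p : nat)
  (f0 : 'rV[R]_n -> 'rV[R]_n) (g0 : 'rV[R]_n -> 'M[R]_(p, n))
  (h0 : 'rV[R]_n -> R) (k0 : 'rV[R]_n -> 'rV[R]_p) (V : 'rV[R]_n * 'rV[R]_p -> R)
  (alpha eps gamma1 gamma mu : R) (y : 'rV[R]_n * 'rV[R]_p) (dV : R) :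
  0 < eps -> 0 < gamma1 -> 0 < mu ->
  LieF h0 f0 y.1 + dotv (LieG h0 g0 y.1) (k0 y.1)
             >= - alpha * h0 y.1 + eps^-1 * sqnorm (LieG h0 g0 y.1) ->
  0 <= V y -> gamma1 * sqnorm (y.2 - k0 y.1) <= V y ->
  dV <= - gamma * V y ->
  gamma >= alpha + eps * mu / 4 ->
  - alpha * (h0 y.1 - (mu * gamma1)^-1 * V y) <=
  'd h0 (y.1) (f0 y.1 + y.2 *m g0 y.1) - (mu * gamma1)^-1 * dV.
Proof.
move=> he hg1 hmu Hk HV0 He HdV hgam.
rewrite linearD /= dh0_xi.
have -> : y.2 = k0 y.1 + (y.2 - k0 y.1) by rewrite addrC subrK.
rewrite dotvDr.
have Y := @dotv_young R p eps (LieG h0 g0 y.1) (y.2 - k0 y.1) he.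
rewrite /LieF in Hk.
move: Hk Y He.
set L := 'd h0 (y.1) (f0 y.1).
set D0 := dotv _ (k0 y.1).
set De := dotv _ (y.2 - k0 y.1).
set SL := sqnorm _. set Se := sqnorm (y.2 - k0 y.1).
move: (V y) HV0 HdV => Vy HV0 HdV.
move=> Hk Y He.
set c := (mu * gamma1)^-1.
have c0 : 0 < c by rewrite invr_gt0 mulr_gt0.
have cmg : c * (mu * gamma1) = 1 by rewrite mulVf // gt_eqF // mulr_gt0.
have K : eps / 4 * Se <= (gamma - alpha) * c * Vy.
  have -> : eps / 4 * Se = eps * mu / 4 * c * (gamma1 * Se).
    apply/esym; rewrite (_ : eps * mu / 4 * c * (gamma1 * Se) = eps / 4 * Se * (c * (mu * gamma1))); first by rewrite cmg mulr1.
    ring.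
  apply: (@le_trans _ _ (eps * mu / 4 * c * Vy)).
    apply: ler_wpM2l => //; apply: mulr_ge0; last exact: ltW.
    by apply: mulr_ge0; [apply: mulr_ge0; apply: ltW|]; rewrite ?invr_ge0 //.
  rewrite -!mulrA; move: (c * Vy) (mulr_ge0 (ltW c0) HV0) => z hz.
  nra.
have K2 : c * dV <= c * (- gamma * Vy) := ler_wpM2l (ltW c0) HdV.
lra.
Qed.

Lemma expR_lin_derive (R : realType) (alpha s : R) :
  is_derive s 1 (fun s => expR (alpha * s)) (expR (alpha * s) * alpha).
Proof.
have E : is_derive s (1:R) ( *%R alpha) alpha.
  have := is_deriveZ alpha (is_derive_id s (1:R)).
  move=> h; rewrite -[X in is_derive _ _ _ X]mulr1; exact: h.
exact: (is_derive1_comp (is_derive_expR (alpha * s)) E).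
Qed.
Theorem theorem12 (R : realType) (n p m : nat)
  (f0 : 'rV[R]_n -> 'rV[R]_n) (g0 : 'rV[R]_n -> 'M[R]_(p, n))
  (f1 : 'rV[R]_n * 'rV[R]_p -> 'rV[R]_p) (g1 : 'rV[R]_n * 'rV[R]_p -> 'M[R]_(m, p))
  (h0 : 'rV[R]_n -> R) (k0 : 'rV[R]_n -> 'rV[R]_p)
  (k : 'rV[R]_n * 'rV[R]_p -> 'rV[R]_m) (V : 'rV[R]_n * 'rV[R]_p -> R)
  (alpha eps gamma1 gamma2 gamma mu : R) :
  loc_lipschitz f0 -> loc_lipschitz g0 -> loc_lipschitz f1 -> loc_lipschitz g1 ->
  C1 h0 -> C1 k0 -> C1 V ->
  0 < alpha -> 0 < eps ->
  (forall q, LieF h0 f0 q + dotv (LieG h0 g0 q) (k0 q)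
             >= - alpha * h0 q + eps^-1 * sqnorm (LieG h0 g0 q)) ->
  0 < gamma1 -> 0 < gamma2 -> 0 < gamma ->
  (forall x, 0 <= V x) ->
  (forall x, gamma1 * sqnorm (x.2 - k0 x.1) <= V x) ->
  (forall x, V x <= gamma2 * sqnorm (x.2 - k0 x.1)) ->
  (forall x, 'd V x (closed_loop f0 g0 f1 g1 k x) <= - gamma * V x) ->
  0 < mu ->
  gamma >= alpha + eps * mu / 4 ->
  forward_invariant (closed_loop f0 g0 f1 g1 k)
    [set x | 0 <= h0 x.1 - (mu * gamma1)^-1 * V x].
Proof.
move=> _ _ _ _ [h0d _] _ [Vd _] ha he Hk hg1 hg2 hg HV0 He1 He2 HdV hmu hgam.
move=> T x T0 xc xd x0 t /andP[t0 tT].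
set c := (mu * gamma1)^-1.
set F := closed_loop f0 g0 f1 g1 k.
pose H := fun y : 'rV[R]_n * 'rV[R]_p => h0 y.1 - c * V y.
pose D := fun s => 'd h0 ((x s).1) (F (x s)).1 - c * 'd V (x s) (F (x s)).
have HD : forall s, 0 < s < T -> is_derive s 1 (H \o x) (D s).
  move=> s hs.
  have [d1 e1] := @h0fst_diff R n p h0 (x s) (h0d _).
  have A := @chain_rule _ _ _ _ _ _ (xd s hs) d1; rewrite e1 in A.
  have B := @chain_rule _ _ _ _ _ _ (xd s hs) (Vd (x s)).
  exact: (is_deriveB A (is_deriveZ c B)).
have Hc : continuous H.
  move=> y; apply: differentiable_continuous.
  have [d1 _] := @h0fst_diff R n p h0 y (h0d _).
  exact: (differentiableB d1 (differentiableZ c (Vd y))).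
have Dge : forall s, 0 < s < T -> - alpha * H (x s) <= D s.
  move=> s hs; exact: (@pointwise R n p f0 g0 h0 k0 V alpha eps gamma1 gamma mu (x s) _ he hg1 hmu (Hk _) (HV0 _) (He1 _) (HdV _) hgam).
rewrite /= -/c.
have [->|tpos] := eqVneq t 0; first exact: x0.
have {}tpos : 0 < t by rewrite lt_neqAle eq_sym tpos t0.
pose g s := expR (alpha * s) * H (x s).
pose dg s := expR (alpha * s) * D s + H (x s) * (expR (alpha * s) * alpha).
have gd : forall s, s \in `]0, t[ -> is_derive s 1 g (dg s).
  move=> s; rewrite in_itv /= => /andP[s0 st].
  have hs : 0 < s < T by rewrite s0 (lt_trans st tT).
  have K := is_deriveM (@expR_lin_derive R alpha s) (HD s hs). exact K.
have xc' : {within `[0, t], continuous x}.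
  apply: continuous_subspaceW xc => s /=; rewrite in_itv /= => /andP[-> st].
  exact: le_lt_trans st tT.
have Hxc : {within `[0, t], continuous (H \o x)}.
  apply: within_continuous_comp xc' => y _; exact: Hc.
have ec : {within `[0, t], continuous (fun s => expR (alpha * s))}.
  apply: continuous_subspaceT => s.
  apply: differentiable_continuous; apply/derivable1_diffP.
  exact: (@ex_derive _ _ _ _ _ _ _ (@expR_lin_derive R alpha s)).
have gc : {within `[0, t], continuous g}.
  move=> s; exact: (@continuousM R (subspace `[0, t]) (fun s => expR (alpha * s)) (H \o x) s (ec s) (Hxc s)).
have [cc hcc eq] := MVT tpos gd gc.
move: hcc; rewrite in_itv /= => /andP[cc0 cct].
have hcs : 0 < cc < T by rewrite cc0 (lt_trans cct tT).
have dge : 0 <= dg cc.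
  have -> : dg cc = expR (alpha * cc) * (D cc + alpha * H (x cc)) by rewrite /dg; ring.
  apply: mulr_ge0; first exact: ltW (expR_gt0 _).
  have := Dge cc hcs; lra.
have gz : g 0 = H (x 0) by rewrite /g mulr0 expR0 mul1r.
have gt : 0 <= g t.
  have -> : g t = g 0 + dg cc * (t - 0) by rewrite -eq; ring.
  rewrite gz; apply: addr_ge0; first exact: x0.
  by apply: mulr_ge0 => //; rewrite subr0 ltW.
by move: gt; rewrite /g pmulr_rge0 // expR_gt0.
Qed.
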